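(* Let $P\subset\mathbb{R}^n$ be the moment polytope of a compact toric manifold, with the notation of the context. Then every formal series of the form $$\sum_{k=1}^{\infty}a_k\,\mathfrak w_1^{e_{k,1}}\cdots\mathfrak w_m^{e_{k,m}}\,w_{m+1}^{e_{k,m+1}}\cdots w_B^{e_{k,B}}\,z_1^{f_{k,1}}\cdots z_m^{f_{k,m}},$$ where $a_k\in\Lambda_0$, $\lim_{k\to\infty}\mathfrak v_T(a_k)=\infty$, $e_{k,i}\in\mathbb{Z}$ for $i\le m$, $e_{k,i}\in\mathbb{Z}_{\ge0}$ for $i>m$, and $f_{k,j}\in\mathbb{Z}_{\ge0}$, is an element of $\Lambda_0^P\langle\!\langle\mathfrak w,\mathfrak w^{-1},w,y,y^{-1}\rangle\!\rangle$. Conversely, every element of $\Lambda_0^P\langle\!\langle\mathfrak w,\mathfrak w^{-1},w,y,y^{-1}\rangle\!\rangle$ can be written as a series of this form.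
   Context: $R$ is a field containing $\mathbb{Q}$. $\Lambda$ is the universal Novikov field of formal sums $\sum_i a_iT^{\lambda_i}$ with $a_i\in R$, $\lambda_i\in\mathbb{R}$ increasing to $\infty$; $\mathfrak v_T(\sum a_iT^{\lambda_i})=\inf\{\lambda_i: a_i\ne0\}$; $\Lambda_0=\{x:\mathfrak v_T(x)\ge0\}$. The polytope: $P=\{u\in\mathbb{R}^n:\ \ell_j(u)\ge0,\ j=1,\dots,m\}$, $\ell_j(u)=\langle\vec v_j,u\rangle-\lambda_j$, with $\vec v_j=(v_{j,1},\dots,v_{j,n})\in\mathbb{Z}^n$ the primitive inward normals to the $m$ facets; $P$ is a Delzant polytope (the moment polytope of a compact toric manifold: each vertex lies on exactly $n$ facets whose normals form a $\mathbb{Z}$-basis of $\mathbb{Z}^n$). Fix an integer $B\ge m$. Consider the ring $\Lambda[\mathfrak w_1^{\pm1},\dots,\mathfrak w_m^{\pm1},w_{m+1},\dots,w_B,y_1^{\pm1},\dots,y_n^{\pm1}]$. For $u\in\operatorname{Int}P$ define $\mathfrak v_T^u\big(\sum_k a_k\,\mathfrak w^{e_k}w^{e'_k}y_1^{f_{k,1}}\cdots y_n^{f_{k,n}}\big)=\inf_k\{\mathfrak v_T(a_k)+\langle f_k,u\rangle: a_k\neq0\}$ (the variables $\mathfrak w,w$ have weight $0$), and $\mathfrak v_T^P(x)=\inf\{\mathfrak v_T^u(x): u\in\operatorname{Int}P\}$, a non-Archimedean valuation. $\Lambda^P\langle\!\langle\mathfrak w,\mathfrak w^{-1},w,y,y^{-1}\rangle\!\rangle$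 denotes the completion with respect to $\mathfrak v_T^P$, and $\Lambda_0^P\langle\!\langle\mathfrak w,\mathfrak w^{-1},w,y,y^{-1}\rangle\!\rangle=\{x:\mathfrak v_T^P(x)\ge0\}$. Finally, $z_j=T^{-\lambda_j}y_1^{v_{j,1}}\cdots y_n^{v_{j,n}}$ for $j=1,\dots,m$ (so that $\mathfrak v_T^u(z_j)=\ell_j(u)$). *)

(* Defs.v *)
From HB Require Import structures.
From mathcomp Require Import all_boot all_order all_algebra.
From mathcomp Require Import reals.
Set Implicit Arguments. Unset Strict Implicit. Unset Printing Implicit Defensive.
Import Order.TTheory GRing.Theory Num.Theory.
Local Open Scope ring_scope.

Section Toric.
Variables (RR : realType) (m n : nat).
(* normals v j = (v_{j,1},...,v_{j,n}) and constants lam j = lambda_j *)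
Variables (v : 'I_m -> 'I_n -> int) (lam : 'I_m -> RR).

Definition pairing (f : 'I_n -> int) (u : 'I_n -> RR) : RR :=
  \sum_(i < n) (f i)%:~R * u i.

Definition ell (j : 'I_m) (u : 'I_n -> RR) : RR := pairing (v j) u - lam j.

Definition inP (u : 'I_n -> RR) : Prop := forall j, 0 <= ell j u.

Definition intP (u : 'I_n -> RR) : Prop :=
  exists eps : RR, 0 < eps /\
    forall w : 'I_n -> RR, (forall i, `|w i - u i| < eps) -> inP w.

Definition is_vertex (u : 'I_n -> RR) : Prop :=
  inP u /\ forall a b : 'I_n -> RR, inP a -> inP b ->
    (forall i, u i = (a i + b i) / 2%:R) -> a = b.

Definition inFace (j : 'I_m) (u : 'I_n -> RR) : Prop := inP u /\ ell j u = 0.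

(* F_j has affine dimension (at least, hence exactly) n-1, i.e. is a facet *)
Definition is_facet (j : 'I_m) : Prop :=
  exists (p0 : 'I_n -> RR) (p : 'I_n.-1 -> 'I_n -> RR),
    inFace j p0 /\ (forall k, inFace j (p k)) /\
    forall c : 'I_n.-1 -> RR,
      (forall x, \sum_(k < n.-1) c k * (p k x - p0 x) = 0) -> forall k, c k = 0.

Definition zbasis (J : {set 'I_m}) : Prop :=
  (forall x : 'I_n -> int, exists c : 'I_m -> int,
      (forall j, j \notin J -> c j = 0) /\
      forall i, x i = \sum_(j < m) c j * v j i) /\
  (forall c : 'I_m -> int, (forall j, j \notin J -> c j = 0) ->
      (forall i, \sum_(j < m) c j * v j i = 0) -> forall j, c j = 0).

Definition primitive (x : 'I_n -> int) : Prop :=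
  forall d : int, (forall i, (d %| x i)%Z) -> `|d|%N = 1%N.

Definition touching (u : 'I_n -> RR) : {set 'I_m} := [set j | ell j u == 0].

Definition delzant : Prop :=
  [/\ exists M : RR, forall u, inP u -> forall i, `|u i| <= M,
      exists u, intP u,
      forall j, primitive (v j),
      forall j, is_facet j &
      [/\ forall j k, j != k -> ~ (forall u, inFace j u <-> inFace k u),
          forall u, is_vertex u -> #|touching u| = n
          & forall u, is_vertex u -> zbasis (touching u)]].

Variable (F : fieldType) (B : nat).

(* a monomial  w^e  w'^e'  y^f  (w'_i stands for w_{m+1+i}) *)
Definition mono : Type :=
  ({ffun 'I_m -> int} * {ffun 'I_(B - m) -> nat} * {ffun 'I_n -> int})%type.

(* An element of Lambda: coefficient function lambda |-> a_lambda, with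
   support finite below every bound (i.e. exponents increasing to infinity). *)
Definition is_nov (c : RR -> F) : Prop :=
  forall E : RR, exists s : seq RR, forall l, c l != 0 -> l < E -> l \in s.

Definition nov0 (c : RR -> F) : Prop := forall l, c l != 0 -> 0 <= l.

(* elements of Lambda[w^±,w,y^±], given by their coefficients:
   g mo l = coefficient of T^l * mo *)
Definition ser : Type := mono -> RR -> F.

Definition is_poly (g : ser) : Prop :=
  (exists s : seq mono, forall mo l, g mo l != 0 -> mo \in s) /\
  forall mo, is_nov (g mo).

Definition ser_sub (g h : ser) : ser := fun mo l => g mo l - h mo l.

Definition val_ge (g : ser) (E : RR) : Prop :=
  forall u, intP u -> forall mo l, g mo l != 0 -> E <= l + pairing mo.2 u.

(* sequences of polynomials that are Cauchy for v_T^P (elements of the completion) *)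
Definition cauchyP (g : nat -> ser) : Prop :=
  (forall N, is_poly (g N)) /\
  forall E : RR, exists N, forall p q, (N <= p)%N -> (N <= q)%N ->
     val_ge (ser_sub (g p) (g q)) E.

(* the limit of g lies in Lambda_0^P<<w,w^-1,w,y,y^-1>> *)
Definition inLam0P (g : nat -> ser) : Prop :=
  cauchyP g /\ exists N, forall p, (N <= p)%N -> val_ge (g p) 0.

Definition same_limP (g h : nat -> ser) : Prop :=
  forall E : RR, exists N, forall p, (N <= p)%N -> val_ge (ser_sub (g p) (h p)) E.

(* exponent of y in z^f, z_j = T^{-lam_j} y^{v_j} *)
Definition yexp (f : 'I_m -> nat) : {ffun 'I_n -> int} :=
  [ffun i => \sum_(j < m) (f j)%:Z * v j i].

Definition tshift (f : 'I_m -> nat) : RR := \sum_(j < m) (f j)%:R * lam j.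

(* the k-th term  a_k w^{e_k} w'^{e'_k} z^{f_k} *)
Definition sterm (a : nat -> RR -> F) (e : nat -> {ffun 'I_m -> int})
  (e' : nat -> {ffun 'I_(B - m) -> nat}) (f : nat -> 'I_m -> nat) (k : nat) : ser :=
  fun mo l => if mo == (e k, e' k, yexp (f k)) then a k (l + tshift (f k)) else 0.

Definition psum a e e' f (N : nat) : ser :=
  fun mo l => \sum_(k < N) sterm a e e' f k mo l.

Definition coeff_ok (a : nat -> RR -> F) : Prop :=
  (forall k, is_nov (a k) /\ nov0 (a k)) /\
  forall E : RR, exists N, forall k, (N <= k)%N -> forall l, a k l != 0 -> E <= l.

End Toric.

(* Main.v *)
From Pilot Require Import Defs.
From HB Require Import structures.
From mathcomp Require Import all_boot all_order all_algebra.
From mathcomp Require Import reals.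
From mathcomp Require Import ring lra zify.
From Stdlib Require Import ClassicalEpsilon FunctionalExtensionality Classical.
Set Implicit Arguments. Unset Strict Implicit. Unset Printing Implicit Defensive.
Import Order.TTheory GRing.Theory Num.Theory.
Import Pilot.Defs.
Local Open Scope ring_scope.

Section Lin.
Variables (RR : realType) (m n : nat).

Lemma pairing_lin (f : 'I_n -> int) (a b : 'I_n -> RR) (x y : RR) :
  pairing f (fun i => x * a i + y * b i) = x * pairing f a + y * pairing f b.
Proof.
rewrite /pairing !mulr_sumr -big_split /=; apply: eq_bigr => i _; ring.
Qed.

Lemma pairing_ext (f : 'I_n -> int) (a b : 'I_n -> RR) :
  (forall i, a i = b i) -> pairing f a = pairing f b.
Proof. by move=> H; apply: eq_bigr => i _; rewrite H. Qed.

Lemma pairing_sum (v : 'I_m -> 'I_n -> int) (f : 'I_n -> int) (c : 'I_m -> int)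
  (u : 'I_n -> RR) :
  (forall i, f i = \sum_(j < m) c j * v j i) ->
  pairing f u = \sum_(j < m) (c j)%:~R * pairing (v j) u.
Proof.
move=> Hf; rewrite /pairing.
under eq_bigr => i _ do rewrite Hf rmorph_sum mulr_suml.
rewrite exchange_big /=; apply: eq_bigr => j _.
rewrite mulr_sumr; apply: eq_bigr => i _; rewrite intrM; ring.
Qed.

Lemma pairing_unit (i0 : 'I_n) (u : 'I_n -> RR) :
  pairing (fun i => (i0 == i)%:Z) u = u i0.
Proof.
rewrite /pairing (bigD1 i0) //= eqxx mul1r big1 ?addr0 // => i Hi.
by rewrite eq_sym (negbTE Hi) mul0r.
Qed.

Lemma exists_min (T : eqType) (s : seq T) (r : T -> RR) : s != [::] ->
  exists2 x, x \in s & forall y, y \in s -> r x <= r y.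
Proof.
elim: s => // a s IH _.
case: (eqVneq s [::]) => [->|Hs].
  by exists a; rewrite ?mem_seq1 // => y; rewrite mem_seq1 => /eqP ->.
have [x Hx Hmin] := IH Hs.
case: (leP (r a) (r x)) => Hax.
  exists a; first by rewrite mem_head.
  move=> y; rewrite in_cons => /orP [/eqP -> //|/Hmin]; exact: le_trans.
exists x; first by rewrite in_cons Hx orbT.
move=> y; rewrite in_cons => /orP [/eqP ->|/Hmin //]; exact: ltW.
Qed.

End Lin.

Section Geo.
Variables (RR : realType) (m n : nat) (v : 'I_m -> 'I_n -> int) (lam : 'I_m -> RR).
Hypothesis hD : delzant v lam.

Lemma ell_move j (u d : 'I_n -> RR) t :
  ell v lam j (fun i => u i + t * d i) = ell v lam j u + t * pairing (v j) d.
Proof.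
rewrite /ell (@pairing_ext _ _ _ _ (fun i => 1 * u i + t * d i)).
  by rewrite pairing_lin mul1r; ring.
by move=> i; rewrite mul1r.
Qed.

Lemma bounded : exists M : RR, forall u, inP v lam u -> forall i, `|u i| <= M.
Proof. by case: hD. Qed.

Lemma move_dir u d : inP v lam u -> (exists i, d i != 0) ->
  exists j1 t, pairing (v j1) d < 0 /\ t * (- pairing (v j1) d) = ell v lam j1 u
    /\ 0 <= t /\ inP v lam (fun i => u i + t * d i).
Proof.
move=> Hu [i0 Hi0].
case: (boolP [exists j, pairing (v j) d < 0]) => [/existsP Hex|Hnex].
  pose s := [seq j <- enum 'I_m | pairing (v j) d < 0].
  have sne : s != [::].
    case: Hex => j Hj; apply/eqP => Hs.
    have : j \in s by rewrite mem_filter Hj mem_enum.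
    by rewrite Hs.
  have [j1 Hj1 Hmin] := exists_min (fun j => ell v lam j u / (- pairing (v j) d)) sne.
  move: Hj1; rewrite mem_filter => /andP [Hj1 _].
  have Hp1 : 0 < - pairing (v j1) d by rewrite oppr_gt0.
  exists j1, (ell v lam j1 u / (- pairing (v j1) d)); split; first by [].
  split; first by rewrite divfK // gt_eqF.
  split; first by apply: divr_ge0; [apply: Hu|apply: ltW].
  move=> j; rewrite ell_move.
  case: (ltP (pairing (v j) d) 0) => Hj.
    have := Hmin j; rewrite mem_filter Hj mem_enum => /(_ isT).
    have Hpj : 0 < - pairing (v j) d by rewrite oppr_gt0.
    rewrite ler_pdivlMr // => H.
    lra.
  apply: addr_ge0; first exact: Hu.
  apply: mulr_ge0; last exact: Hj. apply: divr_ge0; [apply: Hu|apply: ltW]; done.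
exfalso.
have Hpos : forall j, 0 <= pairing (v j) d.
  move=> j; rewrite leNgt; apply/negP => Hj; move/negP: Hnex; apply.
  by apply/existsP; exists j.
have [M HM] := bounded.
have Hd : 0 < `|d i0| by rewrite normr_gt0.
pose t := (M + `|u i0| + 1) / `|d i0|.
have Ht : 0 <= t.
  apply: divr_ge0; last exact: ltW.
  have := HM u Hu i0; have := normr_ge0 (u i0); lra.
have Hin : inP v lam (fun i => u i + t * d i).
  by move=> j; rewrite ell_move; apply: addr_ge0; [apply: Hu|apply: mulr_ge0].
have H1 := HM _ Hin i0.
have H2 : `|t * d i0| <= `|u i0 + t * d i0| + `|u i0|.
  by have := ler_normB (u i0 + t * d i0) (u i0); rewrite addrAC subrr add0r.
have H3 : `|t * d i0| = M + `|u i0| + 1.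
  by rewrite normrM (ger0_norm Ht) /t divfK // gt_eqF.
lra.
Qed.


Lemma pairingB (f : 'I_n -> int) (a b : 'I_n -> RR) :
  pairing f (fun i => a i - b i) = pairing f a - pairing f b.
Proof. by rewrite /pairing -sumrB; apply: eq_bigr => i _; ring. Qed.

Lemma vertex_of u : inP v lam u ->
  ~ (exists d : 'I_n -> RR, (exists i, d i != 0) /\
       forall j, j \in touching v lam u -> pairing (v j) d = 0) ->
  is_vertex v lam u.
Proof.
move=> Hu Hno; split=> // a b Ha Hb Hab.
apply: NNPP => Hne; apply: Hno; exists (fun i => a i - b i); split.
  apply: NNPP => Hall; apply: Hne; apply: functional_extensionality => i.
  apply/eqP; rewrite -subr_eq0; apply: NNPP => Hi; apply: Hall; by exists i; apply/negP.
move=> j; rewrite inE => /eqP Hj.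
have Hu2 : ell v lam j u = (ell v lam j a + ell v lam j b) / 2%:R.
  rewrite /ell (@pairing_ext _ _ _ _ (fun i => 2%:R^-1 * a i + 2%:R^-1 * b i)).
    rewrite pairing_lin; field; done.
  by move=> i; rewrite Hab; field.
have Ha' := Ha j; have Hb' := Hb j.
rewrite (pairingB (v j) a b); move: Hu2 Ha' Hb'; rewrite Hj /ell; lra.
Qed.

Lemma step (f : 'I_n -> int) u : inP v lam u ->
  (exists d : 'I_n -> RR, (exists i, d i != 0) /\
       forall j, j \in touching v lam u -> pairing (v j) d = 0) ->
  exists u', inP v lam u' /\ pairing f u' <= pairing f u /\
     (#|~: touching v lam u'| < #|~: touching v lam u|)%N.
Proof.
move=> Hu [d0 [Hnz Horth]].
pose d := if pairing f d0 <= 0 then d0 else (fun i => - d0 i).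
have Hdf : pairing f d <= 0.
  rewrite /d; case: ifP => // /negbT; rewrite -ltNge => H.
  rewrite (@pairing_ext _ _ _ _ (fun i => 0 - d0 i)); last by move=> i; rewrite sub0r.
  rewrite pairingB /pairing big1 ?sub0r; last by move=> i _; rewrite mulr0.
  by rewrite /pairing in H; lra.
have Hdnz : exists i, d i != 0.
  case: Hnz => i Hi; exists i; rewrite /d; case: ifP => //; by rewrite oppr_eq0.
have Hdorth : forall j, j \in touching v lam u -> pairing (v j) d = 0.
  move=> j Hj; rewrite /d; case: ifP => _; first exact: Horth.
  rewrite (@pairing_ext _ _ _ _ (fun i => 0 - d0 i)); last by move=> i; rewrite sub0r.
  rewrite pairingB Horth // /pairing big1 ?subr0 // => i _; by rewrite mulr0.
have [j1 [t [Hj1 [Ht [Ht0 Hin]]]]] := move_dir Hu Hdnz.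
exists (fun i => u i + t * d i); split=> //; split.
  rewrite (@pairing_ext _ _ _ _ (fun i => 1 * u i + t * d i)); last by move=> i; rewrite mul1r.
  rewrite pairing_lin mul1r.
  have : t * pairing f d <= 0 by rewrite mulr_ge0_le0.
  lra.
apply: proper_card; rewrite properE; apply/andP; split.
  apply/subsetP => j; rewrite !inE => Hj; apply: contra Hj => /eqP Hj.
  by rewrite -Hj ell_move Hdorth ?mulr0 ?addr0 // inE Hj.
apply/subsetPn; exists j1; rewrite !inE.
  apply/negP => /eqP H0; have := Hdorth j1; rewrite inE H0 eqxx => /(_ isT).
  by move=> H; rewrite H in Hj1; rewrite ltxx in Hj1.
rewrite negbK ell_move -Ht; apply/eqP; ring.
Qed.

Lemma descent (f : 'I_n -> int) u : inP v lam u ->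
  exists w, is_vertex v lam w /\ pairing f w <= pairing f u.
Proof.
move: {2}#|~: touching v lam u| (leqnn #|~: touching v lam u|) => k.
elim: k u => [|k IH] u Hk Hu.
  case: (classic (exists d : 'I_n -> RR, (exists i, d i != 0) /\
       forall j, j \in touching v lam u -> pairing (v j) d = 0)) => Hd.
    have [u' [_ [_ Hc]]] := step f Hu Hd; exfalso; move: Hc Hk; lia.
  by exists u; split=> //; apply: vertex_of.
case: (classic (exists d : 'I_n -> RR, (exists i, d i != 0) /\
       forall j, j \in touching v lam u -> pairing (v j) d = 0)) => Hd.
  have [u' [Hu' [Hf Hc]]] := step f Hu Hd.
  have [w [Hw Hfw]] := IH u' ltac:(move: Hc Hk; lia) Hu'.
  by exists w; split=> //; apply: le_trans Hf.
by exists u; split=> //; apply: vertex_of.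
Qed.

End Geo.

Section Geo2.
Variables (RR : realType) (m n : nat) (v : 'I_m -> 'I_n -> int) (lam : 'I_m -> RR).
Hypothesis hD : delzant v lam.

Lemma vzbasis u : is_vertex v lam u -> zbasis v (touching v lam u).
Proof. by case: hD => _ _ _ _ [_ _ H]; apply: H. Qed.

Lemma vertex_uniq u w : is_vertex v lam u -> is_vertex v lam w ->
  touching v lam u = touching v lam w -> u = w.
Proof.
move=> Hu Hw Ht; have [Hsp _] := vzbasis Hu.
apply: functional_extensionality => i0.
have [c [Hc Hci]] := Hsp (fun i => (i0 == i)%:Z).
have E : forall x, (forall j, j \in touching v lam u -> ell v lam j x = 0) ->
   x i0 = \sum_(j < m) (c j)%:~R * lam j.
  move=> x Hx; rewrite -pairing_unit (pairing_sum x Hci).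
  apply: eq_bigr => j _.
  case: (boolP (j \in touching v lam u)) => Hj.
    by have := Hx j Hj; rewrite /ell => /eqP; rewrite subr_eq0 => /eqP ->.
  by rewrite Hc // mul0r mul0r.
rewrite (E u) ?(E w) // => j; first by rewrite Ht inE => /eqP.
by rewrite inE => /eqP.
Qed.

Lemma pivot u (f : 'I_n -> int) (c : 'I_m -> int) j0 : is_vertex v lam u ->
  (forall j, j \notin touching v lam u -> c j = 0) ->
  (forall i, f i = \sum_(j < m) c j * v j i) -> c j0 < 0 ->
  exists w, inP v lam w /\ pairing f w < pairing f u.
Proof.
move=> Hu Hc Hf Hj0.
set J := touching v lam u.
have [Hsp Hind] := vzbasis Hu.
have : forall i : 'I_n, exists D : 'I_m -> int, (forall j, j \notin J -> D j = 0) /\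
    forall i', (i == i')%:Z = \sum_(j < m) D j * v j i'.
  by move=> i; apply: Hsp.
case/fin_all_exists => D HD.
have j0J : j0 \in J.
  apply: contraT => H; have := Hc _ H; move=> H'; rewrite H' in Hj0; by rewrite ltxx in Hj0.
have dual : forall j, j \in J -> \sum_(i < n) v j i * D i j0 = (j == j0)%:Z.
  move=> j HjJ.
  have Hsupp : forall j', j' \notin J ->
      (fun j' => \sum_(i < n) v j i * D i j' - (j == j')%:Z) j' = 0.
    move=> j' Hj'; rewrite /= big1 ?sub0r; last by move=> i _; rewrite (proj1 (HD i)) ?mulr0.
    have -> : (j == j') = false by apply/negP => /eqP E; rewrite -E HjJ in Hj'.
    by rewrite oppr0.
  suff Heq : forall i0, \sum_(j' < m) (fun j' => \sum_(i < n) v j i * D i j' - (j == j')%:Z) j' * v j' i0 = 0.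
    by have := Hind _ Hsupp Heq j0 => /= /eqP; rewrite subr_eq0 => /eqP.
  move=> i0.
  have A : \sum_(j' < m) (\sum_(i < n) v j i * D i j') * v j' i0 =
           \sum_(i < n) v j i * (i == i0)%:Z.
    under eq_bigr => j' _ do rewrite mulr_suml.
    rewrite exchange_big /=; apply: eq_bigr => i _.
    rewrite (proj2 (HD i) i0) mulr_sumr; apply: eq_bigr => j' _; by rewrite mulrA.
  have B : \sum_(i < n) v j i * (i == i0)%:Z = v j i0.
    rewrite (bigD1 i0) //= eqxx mulr1 big1 ?addr0 // => i Hi.
    by rewrite (negbTE Hi) mulr0.
  have C : \sum_(j' < m) (j == j')%:Z * v j' i0 = v j i0.
    rewrite (bigD1 j) //= eqxx mul1r big1 ?addr0 // => j' Hj'.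
    by rewrite eq_sym (negbTE Hj') mul0r.
  under eq_bigr => j' _ do rewrite mulrBl.
  by rewrite sumrB A B C subrr.
pose d := fun i => (D i j0)%:~R : RR.
have pvd : forall j, j \in J -> pairing (v j) d = ((j == j0)%:Z)%:~R.
  move=> j Hj; rewrite -(dual j Hj) rmorph_sum; apply: eq_bigr => i _.
  by rewrite rmorphM.
have pfd : pairing f d = (c j0)%:~R.
  rewrite (pairing_sum d Hf) (bigD1 j0) //= pvd // eqxx mulr1 big1 ?addr0 //.
  move=> j Hj; case: (boolP (j \in J)) => HjJ.
    by rewrite pvd // (negbTE Hj) mulr0.
  by rewrite Hc // mul0r.
have Hdnz : exists i, d i != 0.
  apply: NNPP => H.
  have Hz : forall i, d i = 0.
    by move=> i; apply: NNPP => Hi; apply: H; exists i; apply/negP => /eqP; exact: Hi.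
  have := pvd j0 j0J; rewrite eqxx /pairing big1 => [|i _]; last by rewrite Hz mulr0.
  by move/eqP; rewrite eq_sym intr_eq0.
have Hu0 : inP v lam u by case: Hu.
have [j1 [t [Hj1 [Ht [Ht0 Hin]]]]] := move_dir hD Hu0 Hdnz.
have j1J : j1 \notin J.
  apply/negP => H; move: Hj1; rewrite pvd //; case: (j1 == j0) => /=; lra.
have Hell : 0 < ell v lam j1 u.
  rewrite lt_neqAle Hu0 andbT eq_sym; by move: j1J; rewrite inE.
have Htp : 0 < t.
  rewrite lt_neqAle Ht0 andbT; apply/negP => /eqP Ht00.
  by move: Ht; rewrite -Ht00 mul0r => H; rewrite -H ltxx in Hell.
exists (fun i => u i + t * d i); split=> //.
rewrite (@pairing_ext _ _ _ _ (fun i => 1 * u i + t * d i)); last by move=> i; rewrite mul1r.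
rewrite pairing_lin mul1r pfd.
have Hcn : 0 < - (c j0)%:~R :> RR by rewrite oppr_gt0 ltrz0.
have : 0 < t * - (c j0)%:~R by apply: mulr_gt0.
lra.
Qed.


Definition good (f : 'I_n -> int) u := exists c : 'I_m -> nat,
  (forall j, (c j != 0)%N -> j \in touching v lam u) /\
  forall i, f i = \sum_(j < m) (c j)%:Z * v j i.

Lemma improve (f : 'I_n -> int) u : is_vertex v lam u ->
  good f u \/ exists w, is_vertex v lam w /\ pairing f w < pairing f u.
Proof.
move=> Hu; have [Hsp _] := vzbasis Hu.
have [c [Hc Hf]] := Hsp f.
case: (boolP [forall j, 0 <= c j]) => [/forallP Hpos|/forallPn [j0 Hj0]].
  left; exists (fun j => `|c j|%N); split.
    move=> j Hj; apply: contraT => Hn; move: Hj; by rewrite Hc.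
  move=> i; rewrite Hf; apply: eq_bigr => j _; by rewrite abszE ger0_norm.
right; rewrite -ltNge in Hj0.
have [w [Hw Hlt]] := pivot Hu Hc Hf Hj0.
have [w' [Hw' Hle]] := descent hD f Hw.
by exists w'; split=> //; apply: le_lt_trans Hlt.
Qed.

Lemma intP_inP u : intP v lam u -> inP v lam u.
Proof. by case=> eps [He H]; apply: H => i; rewrite subrr normr0. Qed.

Lemma cone (f : 'I_n -> int) : exists u0, is_vertex v lam u0 /\ good f u0.
Proof.
have [u1 Hu1] : exists u, intP v lam u by case: hD.
have [w0 [Hw0 _]] := descent hD f (intP_inP Hu1).
suff: forall k (s : seq {set 'I_m}) u, (size s <= k)%N -> is_vertex v lam u ->
   (forall w, is_vertex v lam w -> pairing f w < pairing f u -> touching v lam w \in s) ->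
   exists u0, is_vertex v lam u0 /\ good f u0.
  move=> /(_ _ (enum [set: {set 'I_m}]) w0 (leqnn _) Hw0); apply.
  by move=> w _ _; rewrite mem_enum inE.
elim=> [|k IH] s u Hs Hu Hin.
  case: (improve f Hu) => [Hg|[w [Hw Hlt]]]; first by exists u.
  by have := Hin w Hw Hlt; case: s Hs {Hin}.
case: (improve f Hu) => [Hg|[w [Hw Hlt]]]; first by exists u.
have Hws := Hin w Hw Hlt.
apply: (IH [seq J <- s | J != touching v lam w] w) => //.
  have := count_predC (fun J => J != touching v lam w) s.
  have : (0 < count (predC (fun J => J != touching v lam w)) s)%N.
    by rewrite -has_count; apply/hasP; exists (touching v lam w) => //=; rewrite eqxx.
  rewrite size_filter; move: Hs => Hs Hpos Hsum.
  rewrite -ltnS; apply: leq_trans Hs; rewrite -Hsum.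
  by rewrite -{1}[count _ s]addn0 ltn_add2l.
move=> w' Hw' Hlt'; rewrite mem_filter (Hin w' Hw' (lt_trans Hlt' Hlt)) andbT.
apply/negP => /eqP Ht; have E := vertex_uniq Hw' Hw Ht.
by rewrite E ltxx in Hlt'.
Qed.

End Geo2.

Section Geo3.
Variables (RR : realType) (m n : nat) (v : 'I_m -> 'I_n -> int) (lam : 'I_m -> RR).

Lemma pairing_yexp (c : 'I_m -> nat) u :
  pairing (yexp v c) u = tshift lam c + \sum_(j < m) (c j)%:R * ell v lam j u.
Proof.
rewrite (@pairing_sum _ _ _ v _ (fun j => (c j)%:Z)) => [|i]; last by rewrite ffunE.
rewrite /tshift -big_split /=; apply: eq_bigr => j _.
have -> : ((c j)%:Z)%:~R = (c j)%:R :> RR by [].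
rewrite /ell; ring.
Qed.

Lemma pairing_yexp_ge (c : 'I_m -> nat) u : inP v lam u ->
  tshift lam c <= pairing (yexp v c) u.
Proof.
move=> Hu; rewrite pairing_yexp lerDl; apply: sumr_ge0 => j _.
by apply: mulr_ge0 => //; apply: Hu.
Qed.

Hypothesis hD : delzant v lam.

Lemma inf_lemma (f : 'I_n -> int) u0 E l : inP v lam u0 ->
  (forall u, intP v lam u -> E <= l + pairing f u) -> E <= l + pairing f u0.
Proof.
move=> Hu0 H.
have [u1 [eps [Heps Hball]]] : exists u, intP v lam u by case: hD.
have key : forall t, 0 < t -> t <= 1 ->
    E <= l + ((1 - t) * pairing f u0 + t * pairing f u1).
  move=> t Ht0 Ht1; rewrite -pairing_lin; apply: H.
  exists (t * eps); split; first exact: mulr_gt0.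
  move=> w Hw j.
  pose w' := fun i => (w i - (1 - t) * u0 i) / t.
  have Hw' : inP v lam w'.
    apply: Hball => i.
    have -> : w' i - u1 i = (w i - ((1 - t) * u0 i + t * u1 i)) / t.
      by rewrite /w'; field; rewrite gt_eqF.
    rewrite normrM normfV (gtr0_norm Ht0) ltr_pdivrMr // [eps * t]mulrC; exact: Hw.
  rewrite /ell (@pairing_ext _ _ _ w (fun i => (1 - t) * u0 i + t * w' i)).
    rewrite pairing_lin.
    have -> : (1 - t) * pairing (v j) u0 + t * pairing (v j) w' - lam j =
      (1 - t) * ell v lam j u0 + t * ell v lam j w' by rewrite /ell; ring.
    apply: addr_ge0; apply: mulr_ge0.
    - by rewrite subr_ge0.
    - exact: Hu0.
    - exact: ltW.
    - exact: Hw'.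
  by move=> i; rewrite /w'; field; rewrite gt_eqF.
rewrite leNgt; apply/negP => Hlt.
set p0 := pairing f u0 in Hlt key; set p1 := pairing f u1 in key.
pose dl := E - l - p0.
have Hdl : 0 < dl by rewrite /dl; lra.
pose D := dl + `|p1 - p0|.
have HD : 0 < D by rewrite /D; have := normr_ge0 (p1 - p0); lra.
pose t := dl / (2%:R * D).
have H2D : 0 < 2%:R * D by apply: mulr_gt0.
have Ht : t * (2%:R * D) = dl by rewrite /t divfK // gt_eqF.
have Ht0 : 0 < t by apply: divr_gt0.
have Ht1 : t <= 1.
  rewrite /t ler_pdivrMr // mul1r; have := normr_ge0 (p1 - p0); rewrite /D; lra.
have K1 : t * (p1 - p0) <= t * `|p1 - p0|.
  by apply: ler_wpM2l; [exact: ltW|exact: ler_norm].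
have K2 : t * `|p1 - p0| <= t * D.
  by apply: ler_wpM2l; [exact: ltW|rewrite /D; have := normr_ge0 (p1 - p0); lra].
have := key t Ht0 Ht1.
have : t * D * 2%:R = dl by rewrite -Ht; ring.
rewrite /dl in Hdl *; lra.
Qed.

Lemma cone_dec (f : {ffun 'I_n -> int}) : exists c : 'I_m -> nat, yexp v c = f /\
  forall E l, (forall u, intP v lam u -> E <= l + pairing f u) -> E <= l + tshift lam c.
Proof.
have [u0 [Hu0 [c [Hc Hf]]]] := cone hD f.
have Hy : yexp v c = f by apply/ffunP => i; rewrite ffunE Hf.
exists c; split=> // E l H.
have Hin : inP v lam u0 by case: Hu0.
have := inf_lemma Hin H.
rewrite -Hy pairing_yexp big1 ?addr0 // => j _.
case: (eqVneq (c j) 0%N) => [->|Hj]; first by rewrite mul0r.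
by have := Hc j Hj; rewrite inE => /eqP ->; rewrite mulr0.
Qed.

End Geo3.

Lemma sum_seq_nz (F : fieldType) (T : eqType) (s : seq T) (G : T -> F) :
  \sum_(k <- s) G k != 0 -> exists2 k, k \in s & G k != 0.
Proof.
move=> H; apply: NNPP => Hn; move/negP: H; apply; apply/eqP.
apply: big1_seq => k /andP [_ Hk]; apply/eqP; apply: NNPP => Hk'; apply: Hn.
by exists k => //; apply/negP.
Qed.

Lemma sum_ord_nz (F : fieldType) N (G : nat -> F) :
  \sum_(k < N) G k != 0 -> exists k, (k < N)%N /\ G k != 0.
Proof.
rewrite -(big_mkord xpredT G) => /sum_seq_nz [k]; rewrite mem_index_iota => Hk HG.
by exists k.
Qed.

Lemma add_nz (F : fieldType) (x y : F) : x + y != 0 -> x != 0 \/ y != 0.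
Proof.
case: (eqVneq x 0) => [->|]; last by left.
by rewrite add0r; right.
Qed.

Section Nov.
Variables (RR : realType) (F : fieldType).

Lemma is_nov0 : is_nov (fun _ : RR => (0 : F)).
Proof. by move=> E; exists [::] => l; rewrite eqxx. Qed.

Lemma is_novD (c d : RR -> F) : is_nov c -> is_nov d -> is_nov (fun l => c l + d l).
Proof.
move=> Hc Hd E; have [s1 H1] := Hc E; have [s2 H2] := Hd E.
exists (s1 ++ s2) => l /add_nz [H|H] HE; rewrite mem_cat; first by rewrite H1.
by rewrite H2 ?orbT.
Qed.

Lemma is_novN (c : RR -> F) : is_nov c -> is_nov (fun l => - c l).
Proof. by move=> Hc E; have [s H] := Hc E; exists s => l; rewrite oppr_eq0; apply: H. Qed.

Lemma is_novB (c d : RR -> F) : is_nov c -> is_nov d -> is_nov (fun l => c l - d l).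
Proof. by move=> Hc Hd; apply: is_novD => //; apply: is_novN. Qed.

Lemma is_nov_shift (c : RR -> F) s : is_nov c -> is_nov (fun l => c (l + s)).
Proof.
move=> Hc E; have [s0 H] := Hc (E + s).
exists [seq x - s | x <- s0] => l Hl HE.
have -> : l = (l + s) - s by rewrite addrK.
by apply: map_f; apply: H => //; rewrite ltrD2r.
Qed.

Lemma is_nov_sum N (G : nat -> RR -> F) : (forall k, is_nov (G k)) ->
  is_nov (fun l => \sum_(k < N) G k l).
Proof.
move=> HG; elim: N => [|N IH].
  by move=> E; exists [::] => l; rewrite big_ord0 eqxx.
have -> : (fun l => \sum_(k < N.+1) G k l) = (fun l => \sum_(k < N) G k l + G N l).
  by apply: functional_extensionality => l; rewrite big_ord_recr.
exact: is_novD.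
Qed.

End Nov.

Section Part1.
Variables (F : fieldType) (RR : realType) (m n B : nat)
  (v : 'I_m -> 'I_n -> int) (lam : 'I_m -> RR).
Variables (a : nat -> RR -> F) (e : nat -> {ffun 'I_m -> int})
  (e' : nat -> {ffun 'I_(B - m) -> nat}) (f : nat -> 'I_m -> nat).
Hypothesis Ha : coeff_ok a.

Lemma sterm_nz k mo l : sterm v lam a e e' f k mo l != 0 ->
  mo = (e k, e' k, yexp v (f k)) /\ a k (l + tshift lam (f k)) != 0.
Proof. rewrite /sterm; case: (eqVneq mo (e k, e' k, yexp v (f k))) => [->|Hne]; first by []. by rewrite eqxx. Qed.

Lemma sterm_val k mo l u : sterm v lam a e e' f k mo l != 0 -> inP v lam u ->
  a k (l + tshift lam (f k)) != 0 /\ l + tshift lam (f k) <= l + pairing mo.2 u.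
Proof.
move=> /sterm_nz [-> H] Hu; split=> //=.
by rewrite lerD2l; apply: pairing_yexp_ge.
Qed.

Lemma psum_nz N mo l : psum v lam a e e' f N mo l != 0 ->
  exists k, (k < N)%N /\ sterm v lam a e e' f k mo l != 0.
Proof. exact: sum_ord_nz. Qed.

Lemma psum_poly N : is_poly (psum v lam a e e' f N).
Proof.
split.
  exists [seq (e k, e' k, yexp v (f k)) | k <- iota 0 N] => mo l.
  move=> /psum_nz [k [Hk /sterm_nz [-> _]]].
  by apply: map_f; rewrite mem_iota.
move=> mo; apply: (@is_nov_sum _ _ N (fun k l => sterm v lam a e e' f k mo l)) => k; rewrite /sterm.
case: eqP => _; last exact: is_nov0.
apply: is_nov_shift; exact: (proj1 (proj1 Ha k)).
Qed.

Lemma psum_split N p mo l : (N <= p)%N ->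
  psum v lam a e e' f p mo l = \sum_(0 <= k < N) sterm v lam a e e' f k mo l
     + \sum_(N <= k < p) sterm v lam a e e' f k mo l.
Proof.
move=> Hp; rewrite /psum -(big_mkord xpredT (fun k => sterm v lam a e e' f k mo l)).
by rewrite (big_cat_nat (leq0n N) Hp).
Qed.

Lemma part1 : inLam0P v lam (psum v lam a e e' f).
Proof.
split; first split.
- exact: psum_poly.
- move=> E; have [N HN] := proj2 Ha E; exists N => p q Hp Hq u Hu mo l.
  rewrite /ser_sub /= (psum_split _ _ Hp) (psum_split _ _ Hq).
  have E0 : forall x y z : F, x + y - (x + z) = y - z by move=> x y z; ring.
  rewrite E0.
  have Hk : forall r, \sum_(N <= k < r) sterm v lam a e e' f k mo l != 0 ->
      E <= l + pairing mo.2 u.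
    move=> r /sum_seq_nz [k]; rewrite mem_index_iota => /andP [HNk _] Hs.
    have [Ha1 Ha2] := sterm_val Hs (intP_inP Hu).
    exact: le_trans (HN k HNk _ Ha1) Ha2.
  move=> /add_nz [H|H]; [exact: Hk H| rewrite oppr_eq0 in H; exact: Hk H].
- exists 0%N => p _ u Hu mo l /psum_nz [k [_ Hs]].
  have [Ha1 Ha2] := sterm_val Hs (intP_inP Hu).
  exact: le_trans ((proj2 (proj1 Ha k)) _ Ha1) Ha2.
Qed.

End Part1.

Section Blocks.
Variable L : nat -> nat.
Hypothesis L_pos : forall k, (0 < L k)%N.

Definition Sb K := (\sum_(k < K) L k)%N.

Lemma SbS K : Sb K.+1 = (Sb K + L K)%N.
Proof. by rewrite /Sb big_ord_recr. Qed.

Lemma Sb_ge K : (K <= Sb K)%N.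
Proof. elim: K => // K IH; rewrite SbS; have := L_pos K; lia. Qed.

Lemma Sb_mono k k' : (k <= k')%N -> (Sb k <= Sb k')%N.
Proof.
move=> /subnK <-; elim: (k' - k)%N => // d IH; rewrite addSn SbS; lia.
Qed.

Lemma exS t : exists k, (t < Sb k.+1)%N.
Proof. by exists t; have := Sb_ge t.+1. Qed.

Definition bk t := ex_minn (exS t).

Lemma bk_spec t : (Sb (bk t) <= t < Sb (bk t).+1)%N.
Proof.
rewrite /bk; case: ex_minnP => k Hk Hmin; rewrite Hk andbT.
case: k Hk Hmin => [|k] Hk Hmin; first by rewrite /Sb big_ord0.
rewrite leqNgt; apply/negP => H; have := Hmin k H; lia.
Qed.

Lemma bkE k t : (Sb k <= t < Sb k.+1)%N -> bk t = k.
Proof.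
move=> /andP [H1 H2]; have /andP [H3 H4] := bk_spec t.
case: (ltngtP (bk t) k) => // Hlt; exfalso.
- have := Sb_mono Hlt; lia.
- have := Sb_mono Hlt; lia.
Qed.

Variables (F : fieldType) (term : nat -> nat -> F).

Definition T t := term (bk t) (t - Sb (bk t)).

Lemma blockA K r : (r <= L K)%N ->
  \sum_(0 <= t < Sb K + r) T t = \sum_(0 <= t < Sb K) T t + \sum_(0 <= i < r) term K i.
Proof.
move=> Hr; rewrite (big_cat_nat (leq0n (Sb K)) (leq_addr r _)) /=; congr (_ + _).
rewrite -{1}(add0n (Sb K)) big_addn addKn; apply: eq_big_nat => i /andP [_ Hi].
rewrite /T (@bkE K); first by rewrite addnK.
rewrite SbS; apply/andP; split; lia.
Qed.

Lemma blockB K : \sum_(0 <= t < Sb K) T t = \sum_(0 <= k < K) \sum_(0 <= i < L k) term k i.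
Proof.
elim: K => [|K IH]; first by rewrite /Sb big_ord0 !big_geq.
by rewrite SbS blockA // IH big_nat_recr.
Qed.

End Blocks.

Section Part2.
Variables (F : fieldType) (RR : realType) (m n B : nat)
  (v : 'I_m -> 'I_n -> int) (lam : 'I_m -> RR).
Variables (g : nat -> ser RR m n F B) (sp : nat -> seq (mono m n B))
  (Nc : nat -> nat) (N0 : nat) (C : {ffun 'I_n -> int} -> 'I_m -> nat).
Hypothesis Hsp : forall N mo l, g N mo l != 0 -> mo \in sp N.
Hypothesis Hnov : forall N mo, is_nov (g N mo).
Hypothesis HNc : forall (j p q : nat), (Nc j <= p)%N -> (Nc j <= q)%N ->
  val_ge v lam (ser_sub (g p) (g q)) j%:R.
Hypothesis HN0 : forall p, (N0 <= p)%N -> val_ge v lam (g p) 0.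
Hypothesis HC : forall fy, yexp v (C fy) = fy /\ forall E l,
  (forall u, intP v lam u -> E <= l + pairing fy u) -> E <= l + tshift lam (C fy).

Fixpoint Mf k := if k is k'.+1 then maxn (Mf k') (Nc k) else maxn N0 (Nc 0).

Lemma Mf_mono k k' : (k <= k')%N -> (Mf k <= Mf k')%N.
Proof.
move=> /subnK <-; elim: (k' - k)%N => // d IH; rewrite addSn /=.
apply: leq_trans IH (leq_maxl _ _).
Qed.

Lemma Mf_Nc k : (Nc k <= Mf k)%N.
Proof. by case: k => [|k] /=; rewrite leq_maxr. Qed.

Lemma Mf_N0 k : (N0 <= Mf k)%N.
Proof. apply: leq_trans (Mf_mono (leq0n k)); exact: leq_maxl. Qed.

Definition h (k : nat) : ser RR m n F B := fun mo l =>
  if k is k'.+1 then g (Mf k) mo l - g (Mf k') mo l else g (Mf 0) mo l.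

Lemma h_val k : val_ge v lam (h k) (k.-1)%:R.
Proof.
case: k => [|k] /= u Hu mo l Hh.
  by apply: (HN0 (Mf_N0 0)) Hh.
apply: (HNc (p := Mf k.+1) (q := Mf k) _ _ Hu Hh).
  apply: leq_trans (Mf_Nc k) (Mf_mono (leqnSn k)).
exact: Mf_Nc.
Qed.

Definition sk k := undup (sp (Mf k) ++ sp (Mf k.-1)).

Lemma h_supp k mo l : h k mo l != 0 -> mo \in sk k.
Proof.
rewrite /sk mem_undup mem_cat; case: k => [|k] /=.
  by move=> /Hsp ->.
move=> /add_nz [/Hsp ->//|]; rewrite oppr_eq0 => /Hsp ->; by rewrite orbT.
Qed.

Lemma h_nov k mo : is_nov (h k mo).
Proof. case: k => [|k] /=; [exact: Hnov| apply: is_novB; exact: Hnov]. Qed.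

Lemma tele K mo l : \sum_(0 <= k < K.+1) h k mo l = g (Mf K) mo l.
Proof.
elim: K => [|K IH]; first by rewrite big_nat1.
rewrite big_nat_recr //= IH /h /=; ring.
Qed.

Definition Lf k := (size (sk k) + Mf k).+1.

Lemma Lf_pos k : (0 < Lf k)%N. Proof. by []. Qed.

Definition dmo : mono m n B := ([ffun=> 0], [ffun=> 0%N], [ffun=> 0]).

Definition termk k i mo l :=
  if (i < size (sk k))%N && (mo == nth dmo (sk k) i) then h k mo l else 0.

Lemma block_full k mo l : \sum_(0 <= i < Lf k) termk k i mo l = h k mo l.
Proof.
rewrite /Lf (big_cat_nat (leq0n (size (sk k))) (leq_trans (leq_addr (Mf k) _) (leqnSn _))) /=.
rewrite [X in _ + X]big1_seq ?addr0; last first.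
  move=> i /andP [_]; rewrite mem_index_iota => /andP [Hi _].
  by rewrite /termk ltnNge Hi.
have Hu : uniq (sk k) by exact: undup_uniq.
have E1 : \sum_(0 <= i < size (sk k)) termk k i mo l =
    \sum_(0 <= i < size (sk k)) (fun x => if mo == x then h k mo l else 0) (nth dmo (sk k) i).
  by apply: eq_big_nat => i /andP [_ Hi]; rewrite /termk Hi.
rewrite E1.
rewrite -(big_nth dmo xpredT (fun x => if mo == x then h k mo l else 0)).
case: (boolP (mo \in sk k)) => Hin.
  rewrite (bigD1_seq mo) //= eqxx big1 ?addr0 // => x Hx.
  by rewrite eq_sym (negbTE Hx).
rewrite big1_seq; last first.
  move=> x /andP [_ Hx]; case: eqP => // E; by rewrite E Hx in Hin.
apply/esym/eqP; apply: contraT => /h_supp H; by rewrite H in Hin.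
Qed.

Definition bt t := bk Lf_pos t.
Definition SS K := Sb Lf K.
Definition mot t := nth dmo (sk (bt t)) (t - SS (bt t)).
Definition valid t := (t - SS (bt t) < size (sk (bt t)))%N.
Definition ae t (l' : RR) : F :=
  if valid t then h (bt t) (mot t) (l' - tshift lam (C (mot t).2)) else 0.
Definition ee t := (mot t).1.1.
Definition ee' t := (mot t).1.2.
Definition ff t := C (mot t).2.

Lemma sterm_eq t mo l : sterm v lam ae ee ee' ff t mo l = termk (bt t) (t - SS (bt t)) mo l.
Proof.
rewrite /sterm.
have -> : (ee t, ee' t, yexp v (ff t)) = mot t.
  by rewrite /ff (proj1 (HC _)) /ee /ee'; case: (mot t) => [[]].
rewrite /termk /ae -/(valid t).
case: (eqVneq mo (mot t)) => [->|Hne].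
  by rewrite andbT addrK.
by rewrite andbF.
Qed.

Lemma psum_block K r mo l : (r <= Lf K)%N ->
  psum v lam ae ee ee' ff (SS K + r) mo l =
  \sum_(0 <= k < K) h k mo l + \sum_(0 <= i < r) termk K i mo l.
Proof.
move=> Hr; rewrite /psum -(big_mkord xpredT (fun t => sterm v lam ae ee ee' ff t mo l)).
rewrite (eq_bigr (T Lf_pos (fun k i => termk k i mo l))); last by move=> t _; rewrite sterm_eq.
rewrite /SS blockA // blockB; congr (_ + _); apply: eq_big_nat => k _.
exact: block_full.
Qed.

Lemma ae_bound t l' : ae t l' != 0 -> ((bt t).-1)%:R <= l'.
Proof.
rewrite /ae; case: (valid t) => //; last by rewrite eqxx.
move=> Hnz.
have := (proj2 (HC (mot t).2)) ((bt t).-1)%:R (l' - tshift lam (C (mot t).2))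
  (fun u Hu => h_val Hu Hnz).
by rewrite subrK.
Qed.

Lemma bt_ge K t : (SS K.+1 <= t)%N -> (K < bt t)%N.
Proof.
move=> Ht; have /andP [_ H2] := bk_spec Lf_pos t; rewrite -/(bt t) in H2.
rewrite ltnNge; apply/negP => H; have := @Sb_mono Lf _ _ (H : (bt t).+1 <= K.+1)%N.
move: Ht H2; rewrite /SS; lia.
Qed.

Lemma archi_nat (E : RR) : exists K : nat, E <= K%:R.
Proof.
exists (Num.Def.archi_bound `|E|); apply: le_trans (ler_norm E) _.
exact: ltW (archi_boundP (normr_ge0 E)).
Qed.

Lemma part2_ok : coeff_ok ae.
Proof.
split.
  move=> t; split.
    rewrite /ae; case: (valid t); last exact: is_nov0.
    apply: is_nov_shift; exact: h_nov.
  move=> l' /ae_bound; apply: le_trans; exact: ler0n.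
move=> E; have [K0 HK0] := archi_nat E; exists (SS K0.+1) => t Ht l' /ae_bound H.
apply: le_trans HK0 (le_trans _ H); rewrite ler_nat.
have := bt_ge Ht; lia.
Qed.

Lemma part2_lim : same_limP v lam g (psum v lam ae ee ee' ff).
Proof.
move=> E; have [K0 HK0] := archi_nat E; exists (SS K0.+1) => p Hp u Hu mo l.
have HK := bt_ge Hp.
have /andP [H1 H2] := bk_spec Lf_pos p; rewrite -/(bt p) -/(SS _) in H1 H2.
move: HK H1 H2; case E1: (bt p) => [|K'] // HK H1 H2.
have Hr : (p - SS K'.+1 <= Lf K'.+1)%N by move: H2; rewrite /SS SbS -/(SS _); lia.
have Ep : psum v lam ae ee ee' ff p mo l =
   g (Mf K') mo l + \sum_(0 <= i < p - SS K'.+1) termk K'.+1 i mo l.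
  by rewrite -tele -psum_block // subnKC.
rewrite /ser_sub /= Ep.
have -> : g p mo l - (g (Mf K') mo l + \sum_(0 <= i < p - SS K'.+1) termk K'.+1 i mo l) =
   (g p mo l - g (Mf K') mo l) + - \sum_(0 <= i < p - SS K'.+1) termk K'.+1 i mo l by ring.
move=> Hnz.
suff HK' : (K'%:R : RR) <= l + pairing mo.2 u.
  by apply: le_trans HK0 (le_trans _ HK'); rewrite ler_nat; lia.
move: Hnz => /add_nz [H|].
  have Hp' : (Nc K' <= p)%N.
    apply: leq_trans (Mf_Nc K') _; apply: leq_trans H1.
    rewrite /SS SbS /Lf; lia.
  exact: (HNc Hp' (Mf_Nc K') Hu H).
rewrite oppr_eq0 => /sum_seq_nz [i _]; rewrite /termk; case: ifP => _ Hh; last by rewrite eqxx in Hh.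
exact: (h_val Hu Hh).
Qed.

End Part2.
Unset Implicit Arguments.
Theorem lemma3p9 (F : fieldType) (RR : realType) (m n B : nat)
  (v : 'I_m -> 'I_n -> int) (lam : 'I_m -> RR) :
  [pchar F] =i pred0 -> (m <= B)%N -> delzant v lam ->
  (forall (a : nat -> RR -> F) (e : nat -> {ffun 'I_m -> int})
          (e' : nat -> {ffun 'I_(B - m) -> nat}) (f : nat -> 'I_m -> nat),
      coeff_ok a -> inLam0P v lam (psum v lam a e e' f)) /\
  (forall g : nat -> ser RR m n F B, inLam0P v lam g ->
      exists (a : nat -> RR -> F) (e : nat -> {ffun 'I_m -> int})
             (e' : nat -> {ffun 'I_(B - m) -> nat}) (f : nat -> 'I_m -> nat),
        coeff_ok a /\ same_limP v lam g (psum v lam a e e' f)).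
Proof.
move=> _ _ hD; split.
  by move=> a e e' f Ha; apply: part1.
move=> g [[Hpoly Hcau] [N0 HN0]].
have [sp Hsp] : exists sp : nat -> seq (mono m n B),
    forall N mo l, g N mo l != 0 -> mo \in sp N.
  exists (fun N => proj1_sig (constructive_indefinite_description _ (proj1 (Hpoly N)))).
  move=> N; exact: (proj2_sig (constructive_indefinite_description _ (proj1 (Hpoly N)))).
have Hnov : forall N mo, is_nov (g N mo) by move=> N; exact: (proj2 (Hpoly N)).
have [Nc HNc] : exists Nc : nat -> nat, forall (j p q : nat), (Nc j <= p)%N -> (Nc j <= q)%N ->
    val_ge v lam (ser_sub (g p) (g q)) j%:R.
  exists (fun j => proj1_sig (constructive_indefinite_description _ (Hcau j%:R))).
  move=> j; exact: (proj2_sig (constructive_indefinite_description _ (Hcau j%:R))).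
have [C HC] : exists C : {ffun 'I_n -> int} -> 'I_m -> nat, forall fy,
    yexp v (C fy) = fy /\ forall E l,
    (forall u, intP v lam u -> E <= l + pairing fy u) -> E <= l + tshift lam (C fy).
  exists (fun fy => proj1_sig (constructive_indefinite_description _ (cone_dec hD fy))).
  move=> fy; exact: (proj2_sig (constructive_indefinite_description _ (cone_dec hD fy))).
have L1 := part2_ok sp Hnov HNc HN0 HC.
have L2 := part2_lim Hsp HNc HN0 HC.
by do 4 eexists; split; [exact: L1|exact: L2].
Qed.
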